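(* Let $d\ge1$ and $p+q=2d$ with $p,q\ge 0$. Let $\mathcal{K}$ be a $d$-dimensional simplicial complex and let $\mathcal{T}$ be an induced subcomplex of $\mathcal{K}$ isomorphic to the $d$-skeleton of $\Delta^p\ast\partial\Delta^q$, such that every face of $\mathcal{K}$ containing $\Delta^p$ lies in $\mathcal{T}$. Let $\mathcal{L}$ be the complex obtained from $\mathcal{K}$ by replacing $\mathcal{T}$ by $\mathcal{T}'$, the $d$-skeleton of $\partial\Delta^p\ast\Delta^q$ (so all $d$-faces $\Delta^p\ast\rho$, $\rho\in\partial\Delta^q$, are deleted and all $d$-faces $\sigma\ast\Delta^q$, $\sigma\in\partial\Delta^p$, are added). Assume: (II.a) there is a vertex $v_0\in\mathcal{K}_0\setminus\mathcal{T}_0$ (equivalently $v_0\in\mathcal{L}_0\setminus\mathcal{T}'_0$); (II.b) $\widetilde{H}_i(\mathcal{K}-W;\mathbf{Z}_2)=0$ for all $0\le i\le d-1$, whenever $W=\mathcal{T}_0\setminus\rho$ for some face $\rho\in\mathcal{T}\cap\mathcal{T}'$. Then there is an operation assigning to every $i$-simplex $\rho\in\mathcal{K}\cap\mathcal{L}$, $0\le i\le d-1$, an $(i+1)$-chain $v_0\bullet\rho\in C_{i+1}(\mathcal{K}\cap\mathcal{L};\mathbf{Z}_2)$ such that, writing $v_0\bullet\vartheta:=\sum_{\rho\in\vartheta}v_0\bullet\rho$ for an $i$-chain $\vartheta\in C_i(\mathcal{K}\cap\mathcal{L};\mathbf{Z}_2)$: (1) every vertex $w\in\mathcal{T}_0$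 lying in the support of $v_0\bullet\vartheta$ already lies in the support of $\vartheta$; (2) if $\vartheta$ is an $i$-cycle, then $\partial(v_0\bullet\vartheta)=\vartheta$.
   Context: $\Delta^p$ denotes a fixed $p$-simplex (and the complex of all its faces), $\partial\Delta^q$ the boundary complex of a $q$-simplex, and $\ast$ the join; $\Delta^p$ and $\Delta^q$ are vertex-disjoint. $\mathcal{K}_0$ denotes the vertex set of $\mathcal{K}$. For a vertex set $W$, $\mathcal{K}-W$ is the subcomplex of faces of $\mathcal{K}$ containing no vertex of $W$. $\widetilde H_i$ is reduced simplicial homology. Chains are over $\mathbf{Z}_2$ and are identified with sets of simplices; the support of a chain is the union of the vertex sets of its simplices. *)

(* Defs.v *)
From mathcomp Require Import all_boot.
Set Implicit Arguments. Unset Strict Implicit. Unset Printing Implicit Defensive.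

Section Simplicial.
Variable V : finType.

Definition is_complex (K : {set {set V}}) : Prop :=
  set0 \notin K /\
  forall s t : {set V}, s \in K -> t \subset s -> t != set0 -> t \in K.

Definition verts (K : {set {set V}}) : {set V} := \bigcup_(s in K) s.

Definition faces (K : {set {set V}}) (i : nat) : {set {set V}} :=
  [set s in K | #|s| == i.+1].

(* K - W : faces of K containing no vertex of W *)
Definition cdel (K : {set {set V}}) (W : {set V}) : {set {set V}} :=
  [set s in K | [disjoint s & W]].

(* Z2-chains are sets of simplices.  Boundary (augmented, so that the
   boundary of a 0-chain with an odd number of vertices is the empty face
   set0; this yields reduced homology). *)
Definition bdry (c : {set {set V}}) : {set {set V}} :=
  [set t : {set V} | odd #|[set s in c | (t \subset s) && (#|s| == #|t|.+1)]|].

Definition rhom_vanish (K : {set {set V}}) (i : nat) : Prop :=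
  forall c : {set {set V}}, c \subset faces K i -> bdry c = set0 ->
  exists2 b : {set {set V}}, b \subset faces K i.+1 & bdry b = c.

(* d-skeleton of Delta^p * boundary(Delta^q), Delta^p on P, Delta^q on Q *)
Definition skel_join_bd (d : nat) (P Q : {set V}) : {set {set V}} :=
  [set s : {set V} | [&& s != set0, s \subset P :|: Q, ~~ (Q \subset s)
                       & #|s| <= d.+1]].

(* Z2-linear extension of a simplex-wise operation f to a chain th *)
Definition cext (f : {set V} -> {set {set V}}) (th : {set {set V}})
  : {set {set V}} :=
  [set s : {set V} | odd #|[set r in th | s \in f r]|].

End Simplicial.

(* Main.v *)
Require Import Defs.
From mathcomp Require Import all_boot.
Set Implicit Arguments. Unset Strict Implicit. Unset Printing Implicit Defensive.

Section Lin.
Variable V : finType.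
Implicit Types (c A B X th : {set {set V}}) (s : {set V}) (R M N : {set V} -> {set V} -> bool).

Definition lin R c : {set {set V}} := [set t | odd (\sum_(s in c) R s t)].
Definition sd A B : {set {set V}} := (A :\: B) :|: (B :\: A).

Lemma in_sd A B t : (t \in sd A B) = (t \in A) (+) (t \in B).
Proof. rewrite !inE; by case: (t \in A); case: (t \in B). Qed.

Lemma card_sum c (P : pred {set V}) :
  #|[set s in c | P s]| = \sum_(s in c) P s.
Proof.
rewrite -sum1_card big_mkcond /= [RHS]big_mkcond /=.
apply: eq_bigr => s _; rewrite !inE. by case: (s \in c); case: (P s).
Qed.

Lemma oddS (I : Type) (r : seq I) (A : pred I) (F : I -> nat) :
  odd (\sum_(i <- r | A i) F i) = odd (\sum_(i <- r | A i) odd (F i)).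
Proof.
elim/big_rec2: _ => // i x y _ IH. by rewrite !oddD oddb IH.
Qed.

Lemma lin_memE R c t : (t \in lin R c) = odd (\sum_s (s \in c) * R s t).
Proof.
rewrite inE big_mkcond /=; congr odd; apply: eq_bigr => s _.
by case: (s \in c); rewrite ?mul1n ?mul0n.
Qed.

Definition Mb (s t : {set V}) : bool := (t \subset s) && (#|s| == #|t|.+1).

Lemma bdry_lin c : bdry c = lin Mb c.
Proof. apply/setP=> t; by rewrite !inE (card_sum _ (fun s => Mb s t)). Qed.

Lemma cext_lin (f : {set V} -> {set {set V}}) th : cext f th = lin (fun r s => s \in f r) th.
Proof. apply/setP=> t; by rewrite !inE (card_sum _ (fun r => t \in f r)). Qed.

Lemma lin_comp M N c :
  lin M (lin N c) = lin (fun r t => odd (\sum_s N r s * M s t)) c.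
Proof.
apply/setP=> t; rewrite lin_memE [RHS]inE.
transitivity (odd (\sum_s odd ((\sum_(r in c) N r s) * M s t))).
  rewrite oddS; congr odd; apply: eq_bigr => s _.
  by rewrite inE !oddM !oddb.
rewrite -(oddS _ _ (fun s => (\sum_(r in c) N r s) * M s t)).
rewrite (eq_bigr (fun s => \sum_(r in c) N r s * M s t)); last first.
  by move=> s _; rewrite big_distrl.
rewrite exchange_big /=. exact: oddS.
Qed.

Lemma lin_ext R1 R2 c : (forall r, r \in c -> forall t, R1 r t = R2 r t) ->
  lin R1 c = lin R2 c.
Proof. move=> H; apply/setP=> t; rewrite !inE; congr odd; apply: eq_bigr => r rc; by rewrite H. Qed.

Lemma lin_xor R1 R2 c : lin (fun r t => R1 r t (+) R2 r t) c = sd (lin R1 c) (lin R2 c).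
Proof.
apply/setP=> t; rewrite in_sd !inE.
transitivity (odd (\sum_(s in c) (R1 s t + R2 s t))).
  rewrite oddS [RHS]oddS; congr odd; apply: eq_bigr => s _.
  by case: (R1 s t); case: (R2 s t).
by rewrite big_split oddD.
Qed.

Lemma lin_sd R A B : lin R (sd A B) = sd (lin R A) (lin R B).
Proof.
apply/setP=> t; rewrite in_sd !lin_memE.
transitivity (odd (\sum_s ((s \in A) * R s t + (s \in B) * R s t))).
  rewrite oddS [RHS]oddS; congr odd; apply: eq_bigr => s _.
  rewrite in_sd. by case: (s \in A); case: (s \in B); case: (R s t).
by rewrite big_split oddD.
Qed.

Lemma lin_id c : lin (fun r t => t == r) c = c.
Proof.
apply/setP=> t; rewrite lin_memE (bigD1 t) //= eqxx muln1 big1 ?addn0 ?oddb //.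
by move=> s; rewrite eq_sym => /negbTE ->; rewrite muln0.
Qed.

Lemma lin_set1 R r : lin R [set r] = [set t | R r t].
Proof. apply/setP=> t; by rewrite !inE big_set1 oddb. Qed.

Lemma lin_set0 R : lin R set0 = set0.
Proof. apply/setP=> t; by rewrite !inE big_set0. Qed.

Lemma sdA0 A : sd A set0 = A.
Proof. apply/setP=> t; by rewrite in_sd inE addbF. Qed.
Lemma sdvv A : sd A A = set0.
Proof. apply/setP=> t; by rewrite in_sd addbb inE. Qed.
Lemma sdAA A B : sd A (sd A B) = B.
Proof. apply/setP=> t; by rewrite !in_sd addKb. Qed.

Lemma bdry1 (r t : {set V}) : (t \in bdry [set r]) = (t \subset r) && (#|r| == #|t|.+1).
Proof. by rewrite bdry_lin lin_set1 inE. Qed.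

Lemma cext0 (f : {set V} -> {set {set V}}) : cext f set0 = set0.
Proof. by rewrite cext_lin lin_set0. Qed.

Lemma cext_mem (f : {set V} -> {set {set V}}) th s : s \in cext f th -> exists2 r, r \in th & s \in f r.
Proof.
rewrite inE => /odd_gt0 /card_gt0P [r]; rewrite !inE => /andP [? ?]; by exists r.
Qed.

Lemma cext_ext (f g : {set V} -> {set {set V}}) th : (forall r, r \in th -> f r = g r) -> cext f th = cext g th.
Proof. move=> H; rewrite !cext_lin; apply: lin_ext => r rt t; by rewrite H. Qed.

Lemma card_sumT (P : pred {set V}) : #|[set s | P s]| = \sum_s P s.
Proof.
rewrite -sum1_card big_mkcond /=.
apply: eq_bigr => s _; rewrite !inE. by case: (P s).
Qed.

Lemma count2 (r t : {set V}) : \sum_s Mb r s * Mb s t = if (t \subset r) && (#|r| == #|t|.+2) then 2 else 0.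
Proof.
rewrite (eq_bigr (fun s => nat_of_bool (Mb r s && Mb s t))); last first.
  by move=> s _; case: (Mb r s); case: (Mb s t).
rewrite -(card_sumT (fun s => Mb r s && Mb s t)).
case: ifP => [/andP [tr /eqP hr] | hc].
- rewrite (_ : [set s | Mb r s && Mb s t] = [set x |: t | x in r :\: t]).
    rewrite card_in_imset; first by rewrite cardsD (setIidPr tr) hr -addn2 addKn.
    move=> x y; rewrite !inE => /andP [xt _] /andP [yt _] e.
    have : x \in y |: t by rewrite -e setU11.
    by rewrite !inE (negbTE xt) orbF => /eqP.
  apply/setP => s; rewrite inE /Mb; apply/idP/imsetP.
  + move=> /andP [/andP [sr /eqP hs] /andP [ts /eqP hst]].
    have : #|s :\: t| == 1 by rewrite cardsD (setIidPr ts) hst subSn // subnn.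
    move/cards1P => [x sx].
    have xst : x \in s :\: t by rewrite sx set11.
    move: (xst); rewrite inE => /andP [xt xs].
    exists x; first by rewrite inE xt (subsetP sr).
    apply/setP => y.
    have := congr1 (fun A : {set V} => y \in A) sx; rewrite /= !inE.
    case yt: (y \in t); first by rewrite orbT (subsetP ts).
    by rewrite orbF => <-.
  + move=> [x /setDP [xr xt] ->].
    rewrite subUset sub1set xr tr subsetUr cardsU1 xt hr /=. by rewrite !eqxx.
- rewrite (_ : [set s | Mb r s && Mb s t] = set0) ?cards0 //.
  apply/setP => s; rewrite !inE /Mb; apply/negP => /andP [/andP [sr /eqP hs] /andP [ts /eqP hst]].
  by rewrite (subset_trans ts sr) hs hst eqxx in hc.
Qed.

Lemma bdry_bdry c : bdry (bdry c) = set0.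
Proof.
rewrite !bdry_lin lin_comp (lin_ext (R2 := fun _ _ => false)).
  apply/setP=> t; by rewrite !inE big1.
move=> r _ t; rewrite count2; by case: ifP.
Qed.

Lemma key (f : {set V} -> {set {set V}}) X : (forall r, r \in X -> bdry (f r) = sd [set r] (cext f (bdry [set r]))) ->
  bdry (cext f X) = sd X (cext f (bdry X)).
Proof.
move=> H.
rewrite bdry_lin cext_lin lin_comp.
rewrite (lin_ext (R2 := fun r t => (t == r) (+) (t \in cext f (bdry [set r])))); last first.
  move=> r rX t; have := H r rX; move/setP/(_ t).
  rewrite in_sd in_set1 bdry_lin lin_memE => <-; congr odd.
rewrite lin_xor lin_id; congr sd.
rewrite (lin_ext (R2 := fun r t => odd (\sum_s Mb r s * (t \in f s)))).
  by rewrite bdry_lin cext_lin lin_comp.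
move=> r _ t. by rewrite bdry_lin cext_lin lin_comp lin_set1 inE.
Qed.

End Lin.
Theorem lemma11 (V : finType) (d p q : nat) (P Q : {set V})
  (K : {set {set V}}) (v0 : V) :
  1 <= d -> p + q = d.*2 ->
  [disjoint P & Q] -> #|P| = p.+1 -> #|Q| = q.+1 ->
  is_complex K -> (forall s, s \in K -> #|s| <= d.+1) ->
  (exists2 s, s \in K & #|s| = d.+1) ->
  let T := skel_join_bd d P Q in
  let T' := skel_join_bd d Q P in
  let L := (K :\: T) :|: T' in
  T \subset K -> (forall s, s \in K -> s \subset P :|: Q -> s \in T) ->
  (forall s, s \in K -> P \subset s -> s \in T) ->
  v0 \in verts K :\: verts T ->
  (forall rho : {set V}, rho = set0 \/ rho \in T :&: T' ->
     forall i, i <= d.-1 -> rhom_vanish (cdel K (verts T :\: rho)) i) ->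
  exists f : {set V} -> {set {set V}},
    (forall i rho, i <= d.-1 -> rho \in faces (K :&: L) i ->
       f rho \subset faces (K :&: L) i.+1) /\
    (forall i (th : {set {set V}}), i <= d.-1 -> th \subset faces (K :&: L) i ->
       (forall w, w \in verts T -> w \in verts (cext f th) -> w \in verts th) /\
       (bdry th = set0 -> bdry (cext f th) = th)).
Proof.
move=> d1 pq dPQ cP cQ [K0 Kcl] Kdim _ T T' L TK Tind TP v0K IIb.
have inL : forall s, (s \in L) = ((s \notin T) && (s \in K)) || (s \in T').
  by move=> s; rewrite /L !inE.
have inT : forall s, (s \in T) = [&& s != set0, s \subset P :|: Q, ~~ (Q \subset s) & #|s| <= d.+1].
  by move=> s; rewrite /T inE.
have inT' : forall s, (s \in T') = [&& s != set0, s \subset Q :|: P, ~~ (P \subset s) & #|s| <= d.+1].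
  by move=> s; rewrite /T' inE.
set T0 := verts T.
have sT0 : forall s, s \in T -> s \subset T0.
  by move=> s sT; apply: (bigcup_sup s sT).
clearbody L.
have T0PQ : T0 \subset P :|: Q.
  apply/subsetP=> x /bigcupP [s sT xs]. move: sT; rewrite inT => /and4P [_ sPQ _ _].
  exact: (subsetP sPQ).
have F1 : forall rho, rho \in K :&: L -> ~~ (P \subset rho).
  move=> rho; rewrite inE inL => /andP [rK rL]; apply/negP => Pr.
  have rT := TP _ rK Pr.
  move: rL; rewrite rT /= inT' => /and4P [_ _ /negP]; by [].
have F2 : forall rho sg, rho \in K :&: L -> sg \in K -> [disjoint sg & T0 :\: rho] -> sg \in L.
  move=> rho sg rKL sK dis; case sgL: (sg \in L) => //.
  move/negbT: sgL; rewrite inL sK andbT => /norP [/negbNE sT sT'].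
  have sT0' := sT0 _ sT.
  move: sT; rewrite inT => /and4P [sn0 sPQ _ sd].
  move: sT'; rewrite inT' sn0 setUC sPQ sd /= andbT negbK => Ps.
  have srho : sg \subset rho.
    apply/subsetP => x xs.
    have := disjointFr dis xs; rewrite !inE (subsetP sT0' x xs) andbT.
    by move/negbFE.
  by move: (F1 _ rKL); rewrite (subset_trans Ps srho).
have F3 : forall rho, rho \in K :&: L -> forall i, i <= d.-1 ->
    rhom_vanish (cdel K (T0 :\: rho)) i.
  move=> rho rKL i hi.
  have -> : T0 :\: rho = T0 :\: (rho :&: T0).
    by apply/setP => x; rewrite !inE; case: (x \in T0); rewrite ?andbT ?andbF.
  apply: IIb => //.
  case: (eqVneq (rho :&: T0) set0) => [-> | nz]; [by left | right].
  move: (rKL); rewrite inE => /andP [rK _].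
  have r'K : rho :&: T0 \in K by apply: (Kcl rho) => //; apply: subsetIl.
  have r'PQ : rho :&: T0 \subset P :|: Q by apply: (subset_trans (subsetIr _ _) T0PQ).
  rewrite inE (Tind _ r'K r'PQ) /= inT' nz setUC r'PQ (Kdim _ r'K) andbT /=.
  apply/negP => Pr; by move: (F1 _ rKL); rewrite (subset_trans Pr (subsetIl _ _)).
have F4 : forall rho tau : {set V}, rho \in K :&: L -> tau \subset rho -> tau != set0 -> tau \in K :&: L.
  move=> rho tau rKL tr nz.
  move: (rKL); rewrite inE => /andP [rK _].
  have tK : tau \in K by apply: (Kcl rho).
  rewrite inE tK (F2 rho tau rKL tK) //.
  rewrite disjoint_subset; apply/subsetP => x xt; by rewrite !inE (subsetP tr x xt).
pose G (tau : {set V}) := (tau == set0) || (tau \in K :&: L).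
pose I (f : {set V} -> {set {set V}}) tau :=
  (f tau \subset faces (cdel K (T0 :\: tau)) #|tau|) /\
  bdry (f tau) = sd [set tau] (cext f (bdry [set tau])).
have Gsub : forall rho t, G rho -> t \in bdry [set rho] -> G t.
  move=> rho t; rewrite /G bdry1 => /orP [/eqP -> | rKL] /andP [tr _].
    by rewrite subset0 in tr; rewrite tr.
  case: (eqVneq t set0) => //= nz; exact: (F4 rho).
have main : forall n, exists f, forall tau, G tau -> #|tau| <= n -> #|tau| <= d -> I f tau.
  elim=> [|n [f Hf]].
    exists (fun _ => [set [set v0]]) => tau _; rewrite leqn0 cards_eq0 => /eqP -> _.
    split.
      apply/subsetP => s; rewrite inE => /eqP ->.
      move: v0K; rewrite inE => /andP [v0T /bigcupP [s0 s0K vs0]].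
      rewrite !inE cards1 cards0 eqxx andbT disjoints1 !inE negb_and v0T orbT andbT.
      apply: (Kcl s0) => //; [by rewrite sub1set | by apply/set0Pn; exists v0; rewrite set11].
    rewrite cext_lin.
    have -> : bdry [set set0] = set0 :> {set {set V}}.
      by apply/setP => t; rewrite bdry1 cards0 inE andbF.
    rewrite lin_set0 sdA0; apply/setP => t; rewrite bdry1 cards1 !inE eqSS eq_sym cards_eq0.
    case: (eqVneq t set0) => [-> | ] //=; first by rewrite sub0set. by rewrite andbF.
  pose c (tau : {set V}) := sd [set tau] (cext f (bdry [set tau])).
  have ex : forall tau, tau \in K :&: L -> #|tau| = n.+1 -> n.+1 <= d ->
      exists b : {set {set V}}, (b \subset faces (cdel K (T0 :\: tau)) n.+1) && (bdry b == c tau).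
    move=> tau tKL st sd.
    have Gt : G tau by rewrite /G tKL orbT.
    have csub : c tau \subset faces (cdel K (T0 :\: tau)) n.
      apply/subsetP => s; rewrite in_sd in_set1.
      case: eqP => [-> _ | _ /= sC].
        move: (tKL); rewrite inE => /andP [tK _].
        rewrite !inE tK st eqxx andbT /=.
        rewrite disjoint_subset; apply/subsetP => x xt; by rewrite !inE xt.
      have [r rB sr] := cext_mem sC.
      have Gr := Gsub _ _ Gt rB.
      move: (rB); rewrite bdry1 st eqSS => /andP [rt /eqP rn].
      have [Ir _] := Hf r Gr (eq_leq (esym rn)) (leq_trans (eq_leq (esym rn)) (ltnW sd)).
      move: (subsetP Ir s sr); rewrite !inE => /andP [/andP [sK sdis] ss].
      rewrite sK rn ss andbT /=.
      apply: (disjointWr _ sdis); exact: setDS.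
    have cyc : bdry (c tau) = set0.
      rewrite /c bdry_lin lin_sd -!bdry_lin key; last first.
        move=> r rB; have Gr := Gsub _ _ Gt rB.
        move: (rB); rewrite bdry1 st eqSS => /andP [rt /eqP rn].
        by case: (Hf r Gr (eq_leq (esym rn)) (leq_trans (eq_leq (esym rn)) (ltnW sd))).
      by rewrite bdry_bdry cext0 sdA0 sdvv.
    have [b Hb1 Hb2] := F3 tau tKL n (ltac:(by rewrite -ltnS prednK)) _ csub cyc.
    by exists b; rewrite Hb1 Hb2 eqxx.
  pose f' (tau : {set V}) := if [&& tau \in K :&: L, #|tau| == n.+1 & n.+1 <= d]
     then odflt set0 [pick b : {set {set V}} | (b \subset faces (cdel K (T0 :\: tau)) n.+1) && (bdry b == c tau)]
     else f tau.
  have ext : forall r : {set V}, #|r| != n.+1 -> f' r = f r.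
    by move=> r /negbTE hr; rewrite /f' hr andbF.
  have extB : forall tau : {set V}, #|tau| <= n.+1 -> cext f' (bdry [set tau]) = cext f (bdry [set tau]).
    move=> tau ht; apply: cext_ext => r; rewrite bdry1 => /andP [_ /eqP hr].
    apply: ext; apply/negP => /eqP hr'; move: ht; by rewrite hr hr' ltnn.
  exists f' => tau Gt sz szd.
  case: (ltngtP #|tau| n.+1) => [lt | gt | eqs]; last 2 first.
  - by move: sz; rewrite leqNgt gt.
  - have tKL : tau \in K :&: L.
      move: Gt; rewrite /G; case: eqP => //= e; by move: eqs; rewrite e cards0.
    have dn : n.+1 <= d by rewrite -eqs.
    rewrite /I eqs.
    have -> : f' tau = odflt set0 [pick b : {set {set V}} | (b \subset faces (cdel K (T0 :\: tau)) n.+1) && (bdry b == c tau)].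
      by rewrite /f' tKL eqs eqxx dn.
    case: pickP => [b /andP [Hb1 /eqP Hb2] | none].
      by split; [ | rewrite /= Hb2 /c extB ?eqs].
    have [b Hb] := ex tau tKL eqs dn; by move: (none b); rewrite Hb.
  - rewrite /I ext ?(ltn_eqF lt) // extB ?(ltnW lt) //.
    exact: Hf Gt lt szd.
have [f Hf] := main d.
exists f; split.
  move=> i rho hi; rewrite inE => /andP [rKL /eqP rs].
  have rd : #|rho| <= d by rewrite rs -(prednK d1) ltnS.
  have [H1 _] := Hf rho (introT orP (or_intror rKL)) rd rd.
  apply/subsetP => s sf; move: (subsetP H1 s sf); rewrite !inE => /andP [/andP [sK sdis] ss].
  by rewrite sK (F2 rho s rKL sK sdis) /= -rs.
move=> i th hi thF.
have Hth : forall r, r \in th -> I f r.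
  move=> r rt; move: (subsetP thF r rt); rewrite inE => /andP [rKL /eqP rs].
  have rd : #|r| <= d by rewrite rs -(prednK d1) ltnS.
  exact: (Hf r (introT orP (or_intror rKL)) rd rd).
split.
  move=> w wT /bigcupP [s sC ws].
  have [r rt sr] := cext_mem sC.
  have [H1 _] := Hth r rt.
  move: (subsetP H1 s sr); rewrite !inE => /andP [/andP [_ sdis] _].
  apply/bigcupP; exists r => //.
  have := disjointFr sdis ws; rewrite !inE wT andbT; by move/negbFE.
move=> bth; rewrite key; first by rewrite bth cext0 sdA0.
by move=> r rt; case: (Hth r rt).
Qed.
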